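(* Let $r\in\mathbb{Q}_{>0}\setminus\mathbb{N}$ with $\mathsf{n}(r)>1$, and let $S_r=\langle r^n:n\in\mathbb{N}\rangle$. Then $\Delta(S_r)=\{|\mathsf{n}(r)-\mathsf{d}(r)|\}$.
   Context: $\mathbb{N}=\{0,1,2,\dots\}$. For $r\in\mathbb{Q}_{>0}$ write $r=\mathsf{n}(r)/\mathsf{d}(r)$ in lowest terms; $S_r$ is the additive submonoid of $\mathbb{Q}_{\ge0}$ generated by all nonnegative powers of $r$ (atomic under the stated hypotheses). For an atomic monoid $M$ and $x\in M$ with set of lengths $\mathsf{L}(x)$, a positive integer $d$ is a distance of $x$ if $\mathsf{L}(x)\cap\{l,\dots,l+d\}=\{l,l+d\}$ for some $l\in\mathsf{L}(x)$; $\Delta(M)$ is the union over $x\in M$ of the sets of distances of $x$. *)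

(* Defs.v *)
From mathcomp Require Import all_boot all_order all_algebra.
Set Implicit Arguments. Unset Strict Implicit. Unset Printing Implicit Defensive.
Import Order.TTheory GRing.Theory Num.Theory.
Local Open Scope ring_scope.

(* S_r : additive submonoid of Q_{>=0} generated by r^n, n in N.
   x is in S_r iff x is a finite sum of (possibly repeated) powers of r;
   the multiset of exponents is given as a list. *)
Definition inSr (r x : rat) : Prop :=
  exists s : seq nat, x = \sum_(n <- s) r ^+ n.

Definition atomSr (r a : rat) : Prop :=
  [/\ inSr r a, a != 0 &
      forall b c, inSr r b -> inSr r c -> a = b + c -> b = 0 \/ c = 0].

(* l is in L(x): x has a factorization into l atoms (a factorization is a
   finite multiset of atoms, represented as a list) *)
Definition lengthSr (r x : rat) (l : nat) : Prop :=
  exists s : seq rat,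
    [/\ size s = l, forall a, a \in s -> atomSr r a & \sum_(a <- s) a = x].

Definition distanceSr (r x : rat) (d : nat) : Prop :=
  (0 < d)%N /\
  exists l : nat, [/\ lengthSr r x l, lengthSr r x (l + d) &
     forall k : nat, (l < k < l + d)%N -> ~ lengthSr r x k].

Definition DeltaSr (r : rat) (d : nat) : Prop :=
  exists x, inSr r x /\ distanceSr r x d.

(* Main.v *)
Require Import Defs.
From mathcomp Require Import all_boot all_order all_algebra.
From mathcomp Require Import zify ring lra.
Set Implicit Arguments. Unset Strict Implicit. Unset Printing Implicit Defensive.
Import Order.TTheory GRing.Theory Num.Theory.
Local Open Scope ring_scope.

Definition V (r : rat) N (f : nat -> nat) := \sum_(i < N) (f i)%:R * r ^+ i.
Definition W (n d N : nat) (f : nat -> nat) : nat :=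
  (\sum_(i < N) f i * n ^ i * d ^ (N - i))%N.

Lemma VW (r : rat) n d N f : r * d%:R = n%:R ->
  d%:R ^+ N * V r N f = (W n d N f)%:R.
Proof.
move=> hr; rewrite /V /W big_distrr natr_sum; apply: eq_bigr => i _.
have hi : (i <= N)%N by apply: ltnW.
have -> : d%:R ^+ N = d%:R ^+ i * d%:R ^+ (N - i) :> rat by rewrite -exprD subnKC.
rewrite !natrM !natrX -hr exprMn.
set a := r ^+ i; set b := d%:R ^+ i; set c := d%:R ^+ (N - i).
change (b * c * ((f i)%:R * a) = (f i)%:R * (a * b) * c); ring.
Qed.

Lemma keycong p q k a b X Y : coprime p q -> (a < p)%N -> (b < p)%N ->
  (p %| X)%N -> (p %| Y)%N -> (X + a * q ^ k = Y + b * q ^ k)%N -> a = b.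
Proof.
move=> cpq.
wlog ab : a b X Y / (a <= b)%N.
  move=> H ha hb hX hY e; case: (leqP a b) => h; first exact: (H a b X Y).
  by apply/esym; apply: (H b a Y X) => //; apply: ltnW.
move=> ha hb hX hY e.
have h1 : (a * q ^ k <= b * q ^ k)%N by rewrite leq_mul2r ab orbT.
have h2 : ((b - a) * q ^ k = X - Y)%N by rewrite mulnBl; lia.
have : (p %| (b - a) * q ^ k)%N by rewrite h2 dvdn_sub.
rewrite Gauss_dvdl; last by rewrite coprimeXr.
move=> hd; have : (b - a < p)%N by lia.
case: (posnP (b - a)) => h0; first lia.
by move/(leq_ltn_trans (dvdn_leq h0 hd)); rewrite ltnn.
Qed.

Lemma Vrecl r N f : V r N.+1 f = (f 0%N)%:R + r * V r N (fun i => f i.+1).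
Proof.
rewrite /V big_ord_recl expr0 mulr1 big_distrr; congr (_ + _).
apply: eq_bigr => i _ /=; rewrite exprS; ring.
Qed.

Lemma Vrecr r N f : V r N.+1 f = V r N f + (f N)%:R * r ^+ N.
Proof. by rewrite /V big_ord_recr. Qed.

Lemma uniq_hi r n d : coprime n d -> r * d%:R = n%:R -> r != 0 ->
  forall N a b, (forall i, a i < n)%N -> (forall i, b i < n)%N ->
  V r N a = V r N b -> forall i, (i < N)%N -> a i = b i.
Proof.
move=> cnd hr r0; elim=> [|N IH] a b ha hb e i hi //.
have key : forall f, d%:R ^+ N.+1 * V r N.+1 f =
    (W n d N (fun i => f i.+1) * n + f 0%N * d ^ N.+1)%:R.
  move=> f; rewrite Vrecl natrD !natrM natrX -(VW _ _ hr) exprS.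
  rewrite -hr; ring.
have e2 := congr1 (fun x => d%:R ^+ N.+1 * x) e; rewrite /= !key in e2.
move/eqP: e2; rewrite eqr_nat => /eqP e2.
have a0 : a 0%N = b 0%N.
  apply: (keycong cnd (ha 0%N) (hb 0%N) _ _ e2); exact: dvdn_mull.
move: e; rewrite !Vrecl a0 => /addrI /(mulfI r0) e.
case: i hi => [|i] hi //; apply: (IH (fun i => a i.+1) (fun i => b i.+1)) => //.
Qed.

Lemma uniq_lo r n d : coprime n d -> r * d%:R = n%:R ->
  forall N a b, (forall i, 0 < i -> a i < d)%N -> (forall i, 0 < i -> b i < d)%N ->
  V r N a = V r N b -> forall i, (i < N)%N -> a i = b i.
Proof.
move=> cnd hr; elim=> [|N IH] a b ha hb e i hi //.
case: (posnP N) => hN.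
  subst N; move: e; rewrite /V !big_ord1 /= !expr0 !mulr1 => /eqP.
  by rewrite eqr_nat => /eqP; case: i hi.
have key : forall f, d%:R ^+ N * V r N.+1 f = (W n d N f + f N * n ^ N)%:R.
  move=> f; rewrite Vrecr mulrDr (VW _ _ hr) natrD natrM natrX -hr; congr (_ + _).
  rewrite exprMn; ring.
have e2 := congr1 (fun x => d%:R ^+ N * x) e; rewrite /= !key in e2.
move/eqP: e2; rewrite eqr_nat => /eqP e2.
have dW : forall f, (d %| W n d N f)%N.
  move=> f; apply: dvdn_sum => j _; apply: dvdn_mull.
  have := ltn_ord j; rewrite -subn_gt0; case: (N - j)%N => // k _.
  by rewrite expnS dvdn_mulr.
have aN : a N = b N.
  apply: (keycong _ (ha N hN) (hb N hN) (dW a) (dW b) e2).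
  by rewrite coprime_sym.
move: e; rewrite !Vrecr aN => /addIr e.
have : (i <= N)%N by [].
rewrite leq_eqVlt => /orP [/eqP -> //|]; exact: IH.
Qed.

Definition val (r : rat) (s : seq nat) : rat := \sum_(e <- s) r ^+ e.

Lemma val_nil r : val r [::] = 0. Proof. by rewrite /val big_nil. Qed.
Lemma val_cons r x s : val r (x :: s) = r ^+ x + val r s.
Proof. by rewrite /val big_cons. Qed.
Lemma val_cat r s t : val r (s ++ t) = val r s + val r t.
Proof. by rewrite /val big_cat. Qed.
Lemma val_nseq r m k : val r (nseq m k) = m%:R * r ^+ k.
Proof. elim: m => [|m IH]; first by rewrite val_nil mul0r.
by rewrite /= val_cons IH mulrSr mulrDl mul1r addrC. Qed.
Lemma val1 s : val 1 s = (size s)%:R.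
Proof. elim: s => [|x s IH]; first by rewrite val_nil.
by rewrite val_cons IH expr1n /= -addn1 natrD addrC. Qed.

Lemma split_count r k s :
  val r s = (count_mem k s)%:R * r ^+ k + val r (filter (predC1 k) s).
Proof.
elim: s => [|x s IH]; first by rewrite val_nil mul0r add0r.
rewrite /= val_cons IH; case: eqP => [->|ne] /=.
  by rewrite add1n mulrSr mulrDl mul1r; ring.
by rewrite add0n val_cons; ring.
Qed.

Lemma sum_delta (r : rat) N x : (x < N)%N ->
  \sum_(i < N) ((x == i :> nat))%:R * r ^+ i = r ^+ x.
Proof.
move=> hx; rewrite (bigD1 (Ordinal hx)) //= eqxx mul1r big1 ?addr0 //.
move=> i hi; case: eqP => [e|]; last by rewrite mul0r.
by exfalso; move/negP: hi; apply; apply/eqP/val_inj.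
Qed.

Lemma val_count r N s : all (fun e => e < N)%N s ->
  val r s = V r N (fun i => count_mem i s).
Proof.
elim: s => [|x s IH] /=.
  by move=> _; rewrite val_nil /V big1 // => i _; rewrite mul0r.
move=> /andP [hx hs]; rewrite val_cons IH // /V -(sum_delta r hx) -big_split.
by apply: eq_bigr => i _ /=; rewrite natrD mulrDl.
Qed.

Lemma size_count N s : all (fun e => e < N)%N s ->
  size s = (\sum_(i < N) count_mem (nat_of_ord i) s)%N.
Proof.
move=> hs; apply/eqP; rewrite -(eqr_nat rat) -val1 (val_count 1 hs) /V natr_sum.
by apply/eqP; apply: eq_bigr => i _; rewrite expr1n mulr1.
Qed.

Lemma allbound s : all (fun e => e < (sumn s).+1)%N s.
Proof.
elim: s => [|x s IH] //=; rewrite ltnS leq_addr /=.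
by apply: sub_all IH => e /= h; apply: leq_trans h _; rewrite ltnS leq_addl.
Qed.

Lemma bound2 s t : exists N, all (fun e => e < N)%N s /\ all (fun e => e < N)%N t.
Proof.
exists (sumn s + sumn t).+1; split.
  by apply: sub_all (allbound s) => e /= h; apply: leq_trans h _; rewrite ltnS leq_addr.
by apply: sub_all (allbound t) => e /= h; apply: leq_trans h _; rewrite ltnS leq_addl.
Qed.

Lemma trade r (s : seq nat) k1 k2 p q : p%:R * r ^+ k1 = q%:R * r ^+ k2 ->
  (p <= count_mem k1 s)%N -> exists s', [/\ val r s' = val r s,
    (size s' + p = size s + q)%N & (q <= size s')%N].
Proof.
move=> hpq hp.
exists (nseq (count_mem k1 s - p) k1 ++ nseq q k2 ++ filter (predC1 k1) s); split.
- rewrite !val_cat !val_nseq (split_count r k1 s) -hpq natrB //; ring.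
- rewrite !size_cat !size_nseq size_filter.
  have hh : (count (pred1 k1) s + @count nat (predC1 k1) s = size s)%N.
    exact: count_predC.
  lia.
- rewrite !size_cat !size_nseq; lia.
Qed.

From Stdlib Require Import Classical.

Definition L r x l := exists s, size s = l /\ val r s = x.

Section Abstract.
Variables (r : rat) (e : nat) (P : seq nat -> Prop).
Hypothesis He : (0 < e)%N.
Hypothesis H1 : forall s, ~ P s -> exists s', [/\ val r s' = val r s,
    (size s' + e = size s)%N & (2 <= size s')%N].
Hypothesis H2 : forall s t, P s -> P t -> val r s = val r t -> size s = size t.

Lemma canon_exists s : exists t, val r t = val r s /\ P t.
Proof.
have [m hm] := ubnP (size s); elim: m s hm => // m IH s hs.
case: (classic (P s)) => hP; first by exists s.
have [s' [v1 sz _]] := H1 hP.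
have [|t [vt Pt]] := IH s'; first lia.
by exists t; rewrite vt.
Qed.

Lemma noncanon_big s : ~ P s -> exists u, [/\ P u, val r u = val r s & (2 <= size u)%N].
Proof.
have [m hm] := ubnP (size s); elim: m s hm => // m IH s hs hP.
have [s' [v1 sz h2]] := H1 hP.
case: (classic (P s')) => hP'; first by exists s'.
have [|u [Pu vu su]] := IH s' _ hP'; first lia.
by exists u; rewrite vu.
Qed.

Lemma lengths_form s0 t : P s0 -> val r t = val r s0 ->
  exists j, size t = (size s0 + j * e)%N /\
    forall i, (i <= j)%N -> L r (val r s0) (size s0 + i * e).
Proof.
move=> P0; have [m hm] := ubnP (size t); elim: m t hm => // m IH t ht vt.
case: (classic (P t)) => hP.
  exists 0%N; split; first by rewrite mul0n addn0; apply: H2.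
  by move=> i; rewrite leqn0 => /eqP ->; exists s0; rewrite mul0n addn0.
have [t' [v1 sz _]] := H1 hP.
have [|j [sj hj]] := IH t' _ (etrans v1 vt); first lia.
exists j.+1; split; first by rewrite mulSn; lia.
move=> i; rewrite leq_eqVlt => /orP [/eqP ->|]; last exact: hj.
by exists t; split => //; rewrite mulSn; lia.
Qed.

Lemma delta_abstract x0 l1 :
  L r x0 l1 -> L r x0 (l1 + e) ->
  forall d', (exists x, (exists s, val r s = x) /\ (0 < d')%N /\
      exists l, [/\ L r x l, L r x (l + d') &
        forall k, (l < k < l + d')%N -> ~ L r x k]) <-> d' = e.
Proof.
move=> [s1 [sz1 v1]] [s2 [sz2 v2]] d'; split.
  move=> [x [[s vs] [dpos [l [[t [st vt]] [t2 [st2 vt2]] hk]]]]].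
  have [s0 [v0 P0]] := canon_exists s.
  have [j [sj _]] := lengths_form P0 (etrans vt (esym (etrans v0 vs))).
  have [j' [sj' hj']] := lengths_form P0 (etrans vt2 (esym (etrans v0 vs))).
  have jj : (j < j')%N.
    by have := ltn_mul2r e j j'; rewrite He /= => <-; lia.
  case: (ltngtP j'  j.+1) => h; first lia.
    have := hk (size s0 + j.+1 * e)%N.
    have a1 : (j * e < j.+1 * e)%N by rewrite ltn_mul2r He ltnSn.
    have a2 : (j.+1 * e < j' * e)%N by rewrite ltn_mul2r He h.
    have := hj' j.+1 (ltnW h); rewrite v0 vs => hL.
    move=> /(_ _ hL) => H; exfalso; apply: H; lia.
  by subst j'; rewrite mulSn in sj'; lia.
move=> ->; exists x0; split; first by exists s1.
split => //; exists l1; split; [by exists s1| by exists s2|].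
move=> k hk [t [st vt]].
have [s0 [v0 P0]] := canon_exists s1.
have [j1 [sj1 _]] := lengths_form P0 (esym v0).
have [j [sj _]] := lengths_form P0 (etrans vt (esym (etrans v0 v1))).
have a1 : (j1 < j)%N by have := ltn_mul2r e j1 j; rewrite He /= => <-; lia.
have a2 : (j < j1.+1)%N by have := ltn_mul2r e j j1.+1; rewrite He /= mulSn => <-; lia.
lia.
Qed.
End Abstract.

Lemma atom_iff r : 0 < r -> (forall k t, val r t = r ^+ k -> size t = 1%N) ->
  forall a, atomSr r a <-> exists k, a = r ^+ k.
Proof.
move=> r0 Hat a; split.
  move=> [[s ->] a0 H]; case: s a0 H => [|x s]; first by rewrite big_nil eqxx.
  move=> _ H; exists x.
  have hb : inSr r (r ^+ x) by exists [:: x]; rewrite big_seq1.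
  have hc : inSr r (\sum_(n <- s) r ^+ n) by exists s.
  have := H _ _ hb hc; rewrite big_cons => /(_ erefl) [|].
    by move=> h; have := exprn_gt0 x r0; rewrite h ltxx.
  by move=> ->; rewrite addr0.
move=> [k ->]; split.
- by exists [:: k]; rewrite big_seq1.
- by rewrite gt_eqF // exprn_gt0.
move=> b c [s1 ->] [s2 ->] e.
case: s1 e => [|x1 s1] e; first by left; rewrite big_nil.
case: s2 e => [|x2 s2] e; first by right; rewrite big_nil.
have := Hat k (x1 :: s1 ++ x2 :: s2).
rewrite /val -cat_cons big_cat; move=> /(_ (esym e)).
by rewrite size_cat /= addSn addnS.
Qed.

Lemma length_iff r : (forall a, atomSr r a <-> exists k, a = r ^+ k) ->
  forall x l, lengthSr r x l <-> L r x l.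
Proof.
move=> hat x l; split.
  move=> [s [<- hs <-]].
  elim: s hs => [|a s IH] hs; first by exists [::]; rewrite val_nil big_nil.
  have [k ->] := (hat a).1 (hs a (mem_head _ _)).
  have [|t [st vt]] := IH; first by move=> b hb; apply: hs; rewrite in_cons hb orbT.
  by exists (k :: t); rewrite val_cons big_cons vt /= st.
move=> [t [<- <-]]; exists (map (fun k => r ^+ k) t); split.
- by rewrite size_map.
- by move=> a /mapP [k _ ->]; apply/hat; exists k.
- by rewrite big_map.
Qed.

Lemma finish r e (P : seq nat -> Prop) x0 l1 : 0 < r -> (0 < e)%N ->
  (forall s, ~ P s -> exists s', [/\ val r s' = val r s,
    (size s' + e = size s)%N & (2 <= size s')%N]) ->
  (forall s t, P s -> P t -> val r s = val r t -> size s = size t) ->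
  (forall k, P [:: k]) ->
  L r x0 l1 -> L r x0 (l1 + e) ->
  forall d', DeltaSr r d' <-> d' = e.
Proof.
move=> r0 He H1 H2 Pk hl1 hl2 d'.
have Hat : forall k t, val r t = r ^+ k -> size t = 1%N.
  move=> k t vt; case: (classic (P t)) => hP.
    by rewrite (H2 _ _ hP (Pk k)) // vt /val big_seq1.
  have [u [Pu vu su]] := noncanon_big He H1 hP.
  have := H2 _ _ Pu (Pk k); rewrite vu vt /val big_seq1 => /(_ erefl) h.
  by rewrite h in su.
have hlen := length_iff (atom_iff r0 Hat).
rewrite -(delta_abstract He H1 H2 hl1 hl2 d').
split.
  move=> [x [[s ->] [dp [l [h1 h2 h3]]]]].
  exists (val r s); split; first by exists s.
  split => //; exists l; split; [exact/hlen|exact/hlen|].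
  by move=> k hk /hlen; apply: h3.
move=> [x [[s <-] [dp [l [h1 h2 h3]]]]].
exists (val r s); split; first by exists s.
split => //; exists l; split; [exact/hlen|exact/hlen|].
by move=> k hk /hlen; apply: h3.
Qed.

Theorem mainTheorem10 (r : rat) :
  0 < r -> ~ (exists m : nat, r = m%:R) -> (1 < numq r)%R ->
  forall d : nat, DeltaSr r d <-> d = `|numq r - denq r|%N.
Proof.
move=> r0 notnat n1 d'.
set n := `|numq r|%N; set d := `|denq r|%N.
have hn : numq r = n%:Z.
  by rewrite /n gez0_abs // ltW // (lt_trans _ n1).
have hd : denq r = d%:Z by rewrite /d gez0_abs // ltW // denq_gt0.
have cnd : coprime n d by apply: coprime_num_den.
clearbody n d.
have d0 : (0 < d)%N by rewrite -ltz_nat -hd denq_gt0.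
have hr : r * d%:R = n%:R.
  rewrite -{1}(divq_num_den r) hn hd /= divfK //.
  by rewrite pnatr_eq0 -lt0n.
have n2 : (1 < n)%N by move: n1; rewrite hn ltz_nat.
have d2 : (1 < d)%N.
  have : d != 1%N.
    apply/eqP => h; apply: notnat; exists n.
    by move: hr; rewrite h mulr1n mulr1.
  lia.
have nd : n != d.
  by apply/eqP => h; move: cnd; rewrite h /coprime gcdnn => /eqP h1; lia.
rewrite hn hd.
have rpow : forall k, r ^+ k.+1 * d%:R = r ^+ k * n%:R.
  by move=> k; rewrite exprSr -mulrA hr.
have r0' : r != 0 by rewrite gt_eqF.
have hx1 : L r n%:R n by exists (nseq n 0%N); rewrite size_nseq val_nseq expr0 mulr1.
have hx2 : L r n%:R d by exists (nseq d 1%N); rewrite size_nseq val_nseq expr1 mulrC.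
case: (ltngtP n d) => hnd; last by rewrite hnd eqxx in nd.
-
  have -> : `|n%:Z - d%:Z|%N = (d - n)%N by lia.
  pose P := fun s : seq nat => forall k, (count_mem k.+1 s < d)%N.
  have H1 : forall s, ~ P s -> exists s', [/\ val r s' = val r s,
    (size s' + (d - n) = size s)%N & (2 <= size s')%N].
    move=> s hP.
    have [k /negP hk] := not_all_ex_not _ _ hP; rewrite -leqNgt in hk.
    have eq : d%:R * r ^+ k.+1 = n%:R * r ^+ k by rewrite mulrC rpow mulrC.
    have [s' [v1 sz h2]] := trade eq hk.
    exists s'; split => //; lia.
  have H2 : forall s t, P s -> P t -> val r s = val r t -> size s = size t.
    move=> s t Ps Pt v; have [N [hs ht]] := bound2 s t.
    have e := etrans (esym (val_count r hs)) (etrans v (val_count r ht)).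
    have ha : forall i, (0 < i)%N -> (count_mem i s < d)%N by case=> // k _; exact: Ps.
    have hb : forall i, (0 < i)%N -> (count_mem i t < d)%N by case=> // k _; exact: Pt.
    have hc := uniq_lo cnd hr ha hb e.
    rewrite (size_count hs) (size_count ht); apply: eq_bigr => i _.
    exact: hc.
  have Pk : forall k, P [:: k] by move=> k k' /=; case: eqP => _; lia.
  have hl2 : L r n%:R (n + (d - n)) by rewrite subnKC // ltnW.
  apply: (finish r0 _ H1 H2 Pk hx1 hl2 d'); lia.
-
  have -> : `|n%:Z - d%:Z|%N = (n - d)%N by lia.
  pose P := fun s : seq nat => forall k, (count_mem k s < n)%N.
  have H1 : forall s, ~ P s -> exists s', [/\ val r s' = val r s,
    (size s' + (n - d) = size s)%N & (2 <= size s')%N].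
    move=> s hP.
    have [k /negP hk] := not_all_ex_not _ _ hP; rewrite -leqNgt in hk.
    have eq : n%:R * r ^+ k = d%:R * r ^+ k.+1 by rewrite mulrC -rpow mulrC.
    have [s' [v1 sz h2]] := trade eq hk.
    exists s'; split => //; lia.
  have H2 : forall s t, P s -> P t -> val r s = val r t -> size s = size t.
    move=> s t Ps Pt v; have [N [hs ht]] := bound2 s t.
    have e := etrans (esym (val_count r hs)) (etrans v (val_count r ht)).
    have hc := uniq_hi cnd hr r0' (N := N) Ps Pt e.
    rewrite (size_count hs) (size_count ht); apply: eq_bigr => i _.
    exact: hc.
  have Pk : forall k, P [:: k] by move=> k k' /=; case: eqP => _; lia.
  have hl2 : L r n%:R (d + (n - d)) by rewrite subnKC // ltnW.
  apply: (finish r0 _ H1 H2 Pk hx2 hl2 d'); lia.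
Qed.
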